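(* Let $K$ be a field, $c\in K\setminus\{0\}$, $n\ge1$, and let $f$ be a $c$-frieze of order $n$ over $K$. Then there exist $s,t\in K$ such that $f(2i,2i+n)=s$ and $f(2i+1,2i+n+1)=t$ for all $i\in\mathbb{Z}$ (so row $n+1$ of $f$ alternates $\dots,s,t,s,t,\dots$), and moreover $st=(-c)^{n+1}$.
   Context: The $c$-continuant polynomials $P_k=P_k^c$ ($k\ge-1$) are defined by $P_{-1}=0$, $P_0=1$, and for $k\ge1$, $P_k(x_1,\dots,x_k)=x_kP_{k-1}(x_1,\dots,x_{k-1})+cP_{k-2}(x_1,\dots,x_{k-2})$. A family $(x_i)_{i\in\mathbb{Z}}$ in $K$ is $n$-admissible if $P_{n+2}(x_i,\dots,x_{i+n+1})=0$ for all $i$. Let $\mathbb{B}_n=\{(i,j)\in\mathbb{Z}^2:-2\le j-i\le n+1\}$. A $c$-frieze of order $n$ is a function $f:\mathbb{B}_n\to K$ for which there is an $n$-admissible family $(x_i)$ with $f(i,j)=P_{j-i+1}(x_i,\dots,x_j)$ for all $(i,j)\in\mathbb{B}_n$. Row $k$ ($-1\le k\le n+2$) of $f$ consists of the values $f(i,i+k-1)$, $i\in\mathbb{Z}$. *)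

(* Defs.v *)
From mathcomp Require Import all_boot all_order all_algebra.
Set Implicit Arguments. Unset Strict Implicit. Unset Printing Implicit Defensive.
Import Order.TTheory GRing.Theory Num.Theory.
Local Open Scope ring_scope.

(* c-continuant: contP c y k = P_k(y 1, ..., y k), with P_{-1}=0 encoded by
   the pair recursion: contP c y 0 = 1, contP c y 1 = y 1 * 1 + c * 0 = y 1,
   contP c y (k+2) = y (k+2) * P_{k+1} + c * P_k. *)
Fixpoint contP2 (K : fieldType) (c : K) (y : nat -> K) (k : nat) : K * K :=
  (* returns (P_k, P_{k-1}) *)
  match k with
  | 0 => (1, 0)
  | k'.+1 => let (p, q) := contP2 c y k' in (y k'.+1 * p + c * q, p)
  end.

Definition contP (K : fieldType) (c : K) (y : nat -> K) (k : nat) : K :=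
  (contP2 c y k).1.

(* P_k(x_i, ..., x_{i+k-1}) for a Z-indexed family x *)
Definition contZ (K : fieldType) (c : K) (x : int -> K) (i : int) (k : nat) : K :=
  contP c (fun m : nat => x (i + m%:Z - 1)) k.

Definition admissible (K : fieldType) (c : K) (n : nat) (x : int -> K) : Prop :=
  forall i : int, contZ c x i n.+2 = 0.

Definition inB (n : nat) (i j : int) : Prop :=
  -2 <= j - i /\ j - i <= n.+1%:Z.

(* f : Z x Z -> K is a c-frieze of order n (only its values on B_n matter).
   For (i,j) in B_n, j - i + 1 >= -1; P_{-1} = 0 is handled separately. *)
Definition is_frieze (K : fieldType) (c : K) (n : nat) (f : int -> int -> K) : Prop :=
  exists x : int -> K, admissible c n x /\
    forall i j : int, inB n i j ->
      f i j = (if j - i + 1 < 0 then 0 else contZ c x i (absz (j - i + 1))).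

(* Main.v *)
Require Import Defs.
From mathcomp Require Import all_boot all_order all_algebra.
From mathcomp Require Import ring zify.
Import Order.TTheory GRing.Theory Num.Theory.
Local Open Scope ring_scope.
Set Implicit Arguments. Unset Strict Implicit. Unset Printing Implicit Defensive.

Lemma contP2S (K : fieldType) (c : K) (y : nat -> K) k :
  contP2 c y k.+1 = (y k.+1 * (contP2 c y k).1 + c * (contP2 c y k).2, (contP2 c y k).1).
Proof. by rewrite /=; case: (contP2 c y k). Qed.

Lemma contP2_ext (K : fieldType) (c : K) (y z : nat -> K) k :
  (forall m, y m = z m) -> contP2 c y k = contP2 c z k.
Proof.
move=> e; elim: k => [|k IH] //=; by rewrite IH e.
Qed.

Lemma contP2_det (K : fieldType) (c : K) (y : nat -> K) k :
  (contP2 c y k.+1).2 * (contP2 c (fun m => y m.+1) k).1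
  - (contP2 c y k.+1).1 * (contP2 c (fun m => y m.+1) k).2 = (- c) ^+ k.
Proof.
elim: k => [|k IH].
  by rewrite /= !mulr1 mulr0 subr0.
rewrite (contP2S c y k.+1) (contP2S c (fun m => y m.+1) k) exprS -IH /=.
move: (contP2 c y k.+1) (contP2 c (fun m => y m.+1) k) => [a1 a0] [b1 b0] /=; ring.
Qed.

Theorem mainTheorem8 (K : fieldType) (c : K) (n : nat) (f : int -> int -> K) :
  c != 0 -> (1 <= n)%N -> is_frieze c n f ->
  exists s t : K,
    (forall i : int, f (2 * i) (2 * i + n%:Z) = s) /\
    (forall i : int, f (2 * i + 1) (2 * i + n%:Z + 1) = t) /\
    s * t = (- c) ^+ n.+1.
Proof.
move=> c0 _ [x [adm hf]].
pose u j := contZ c x j n.+1.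
have hfu : forall j, f j (j + n%:Z) = u j.
  move=> j; rewrite hf; last by rewrite /inB; split; lia.
  have -> : j + n%:Z - j + 1 = (n.+1)%:Z by lia.
  by [].
have prod : forall j, u j * u (j + 1) = (- c) ^+ n.+1.
  move=> j.
  have Sh : contP2 c (fun m : nat => x (j + (m.+1)%:Z - 1)) n.+1
          = contP2 c (fun m : nat => x (j + 1 + m%:Z - 1)) n.+1.
    apply: contP2_ext => m; congr (x _); by rewrite -addn1 PoszD addrA (addrAC j).
  have := contP2_det c (fun m : nat => x (j + m%:Z - 1)) n.+1.
  rewrite Sh.
  have := adm j; rewrite /contZ /contP => ->; rewrite mul0r subr0 /u /contZ /contP.
  by move=> <-; rewrite (contP2S c (fun m : nat => x (j + m%:Z - 1)) n.+1).
have C0 : (- c) ^+ n.+1 != 0 by rewrite expf_neq0 // oppr_eq0.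
have per : forall j, u (j + 2) = u j.
  move=> j; have h1 := prod j; have h2 := prod (j + 1).
  have nz : u (j + 1) != 0.
    by apply: contraNneq C0 => e; rewrite -h1 e mulr0.
  apply: (mulIf nz); have -> : j + 2 = j + 1 + 1 by rewrite -addrA.
  by rewrite h1 mulrC h2.
have per2 : forall j (m : nat), u (j + 2 * m%:Z) = u j.
  move=> j; elim=> [|m IH]; first by rewrite mulr0 addr0.
  have -> : j + 2 * (m.+1)%:Z = (j + 2 * m%:Z) + 2 by lia.
  by rewrite per.
have ev : forall j i, u (j + 2 * i) = u j.
  move=> j [m|m]; first by rewrite per2.
  rewrite -[u (j + _)](per2 _ m.+1); congr u; rewrite NegzE; lia.
exists (u 0), (u 1); split; [|split].
- by move=> i; rewrite hfu -(ev 0 i) add0r.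
- by move=> i; rewrite -addrA [n%:Z + 1]addrC addrA hfu (addrC _ 1) ev.
- by rewrite -(prod 0) add0r.
Qed.
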